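(* Let $r_{\min}\in(0,1)$, $n\ge1$, $\gamma\ge1$ a perfect-square integer, and $\ell\ge0$ an integer with $\gamma^{\ell+1}\le n$. Put $a_\ell=n/\gamma^\ell$, $a_{\ell+1}=a_\ell/\gamma$, $n_\ell=n/(2^\ell\gamma^\ell)$, $n_{\ell+1}=n_\ell/(2\gamma)$, $K_1=\frac{4(1+r_{\min})^2}{\pi r_{\min}^2}$, $K_2=\frac1{2K_1}$, $M=K_22^{-\ell}\gamma$ (all assumed integers, $M$ even), and assume $M\ge100$. Let $V\subset[0,\sqrt{a_\ell}]^2$ with $|V|=n_\ell$ and minimum separation $r_{\min}$, partition $[0,\sqrt{a_\ell}]^2$ into $\gamma$ squarelets of side $\sqrt{a_{\ell+1}}$, and let $\mathcal D$ be a set of $M$ dense squarelets (squarelets containing at least $n_{\ell+1}$ points of $V$). Let $\lambda$ be any set of $n_\ell$ source–destination pairs on $V$ in which every node is a source exactly once and a destination exactly once. Then for each pair $p=(u,w)$ there is a set $R_p\subset\mathcal D$ of exactly $M/2$ squarelets $k$ with $r_{u,k}\ge\sqrt{2a_{\ell+1}}$ and $r_{w,k}\ge\sqrt{2a_{\ell+1}}$, and the set of incidences $\{(p,k):p\in\lambda,\ k\in R_p\}$ can be partitioned into at most $K_22^{-\ell}\gamma^2$ classes such that in each class every pair $p$ occurs at most once and every squarelet $k$ occurs in at most $n_{\ell+1}$ incidences. (Consequently each pair occurs in exactly $K_22^{-\ell-1}\gamma$ classes, with distinct squarelets.)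
   Context: For a point $u$ and a squarelet $A$, $r_{u,A}=\min_{v\in A}\lVert u-v\rVert$ denotes the Euclidean distance from $u$ to the closest point of $A$. *)

(* Defs.v *)
From Stdlib Require Import Reals Lra List.
Import ListNotations.
Open Scope R_scope.

Definition pt : Type := (R * R)%type.

Definition edist (u v : pt) : R :=
  sqrt ((fst u - fst v) ^ 2 + (snd u - snd v) ^ 2).

Definition is_nat (x : R) : Prop := exists k : nat, x = INR k.

(* Squarelets are indexed by (i,j) with i,j < s where gamma = s*s;
   squarelet (i,j) has side h and lower-left corner (i*h, j*h). *)
Definition squarelet : Type := (nat * nat)%type.

Definition in_closed_sq (h : R) (k : squarelet) (v : pt) : Prop :=
  INR (fst k) * h <= fst v <= INR (S (fst k)) * h /\
  INR (snd k) * h <= snd v <= INR (S (snd k)) * h.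

(* r_{u,A} >= c, where r_{u,A} = min_{v in A} ||u - v|| (A closed squarelet). *)
Definition r_ge (h : R) (u : pt) (k : squarelet) (c : R) : Prop :=
  forall v : pt, in_closed_sq h k v -> c <= edist u v.

(* Membership of a point in a cell of the partition of [0, s h]^2 into s*s
   squarelets: half-open cells, with the last row/column closed. *)
Definition coord_in (s : nat) (h : R) (i : nat) (x : R) : Prop :=
  INR i * h <= x /\ (x < INR (S i) * h \/ (S i = s /\ x <= INR s * h)).

Definition in_cell (s : nat) (h : R) (k : squarelet) (v : pt) : Prop :=
  coord_in s h (fst k) (fst v) /\ coord_in s h (snd k) (snd v).

Definition dense (s : nat) (h : R) (V : list pt) (m : R) (k : squarelet) : Prop :=
  exists W : list pt, NoDup W /\ incl W V /\ Forall (in_cell s h k) W /\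
                      m <= INR (length W).

(* Main.v *)
Require Import Defs.
From Stdlib Require Import Reals Lra List Permutation Lia ClassicalEpsilon FinFun.
Import ListNotations.
Open Scope R_scope.

Lemma in_firstn_in {A} (n : nat) (l : list A) x : In x (firstn n l) -> In x l.
Proof. intro H. rewrite <- (firstn_skipn n l). apply in_or_app; auto. Qed.

Lemma nodup_firstn {A} (n : nat) (l : list A) : NoDup l -> NoDup (firstn n l).
Proof. intro H. rewrite <- (firstn_skipn n l) in H. eapply NoDup_app_remove_r; eauto. Qed.

Fixpoint pos {A} (dec : forall x y : A, {x = y} + {x <> y}) (x : A) (l : list A) : nat :=
  match l with [] => 0%nat | y :: t => if dec x y then 0%nat else S (pos dec x t) end.

Lemma pos_lt {A} dec (x : A) l : In x l -> (pos dec x l < length l)%nat.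
Proof.
  induction l as [|y t IH]; simpl; [tauto|]. intros [E|H]; [subst y|].
  - destruct (dec x x); [lia|congruence].
  - destruct (dec x y); [lia|]. specialize (IH H). lia.
Qed.

Lemma pos_inj {A} dec (x y : A) l : In x l -> In y l -> pos dec x l = pos dec y l -> x = y.
Proof.
  induction l as [|z t IH]; simpl; [tauto|]. intros Hx Hy.
  destruct (dec x z) as [->|nx]; destruct (dec y z) as [->|ny]; try congruence; try lia.
  intro E. injection E. apply IH.
  destruct Hx; [congruence|auto]. destruct Hy; [congruence|auto].
Qed.

Definition pair_dec : forall x y : pt * pt, {x = y} + {x <> y}.
Proof.
  intros [[a b] [c d]] [[a' b'] [c' d']].
  destruct (Req_EM_T a a'); destruct (Req_EM_T b b'); destruct (Req_EM_T c c'); destruct (Req_EM_T d d');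
  subst; try (left; reflexivity); right; intro E; injection E; intros; congruence.
Defined.

Definition sq_dec : forall x y : squarelet, {x = y} + {x <> y}.
Proof. decide equality; apply Nat.eq_dec. Defined.

Lemma coord_bound (a x y : R) (i : nat) : 0 < a ->
  INR i * sqrt a <= y <= INR (S i) * sqrt a -> Rabs (x - y) < sqrt (2 * a) ->
  In i (seq (Z.to_nat (up (x / sqrt a - 5/2))) 4).
Proof.
  intros Ha [Hy1 Hy2] Hd.
  set (h := sqrt a) in *.
  assert (Hh : 0 < h) by (apply sqrt_lt_R0; lra).
  assert (Hhh : h * h = a) by (apply sqrt_sqrt; lra).
  assert (Hs2 : sqrt (2*a) * sqrt (2*a) = 2*a) by (apply sqrt_sqrt; lra).
  assert (Hs0 : 0 <= sqrt (2*a)) by apply sqrt_pos.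
  assert (Hlt : sqrt (2*a) < 3/2 * h) by nra.
  rewrite S_INR in Hy2.
  assert (H1 : x - y < 3/2*h) by (eapply Rle_lt_trans; [apply Rle_abs|lra]).
  assert (H2 : y - x < 3/2*h).
  { rewrite Rabs_minus_sym in Hd. eapply Rle_lt_trans; [apply Rle_abs|lra]. }
  set (t := x / h).
  assert (Hx : x = t * h) by (unfold t; field; lra).
  rewrite Hx in H1, H2.
  assert (A1 : INR i < t + 3/2) by nra.
  assert (A2 : t - 5/2 < INR i) by nra.
  destruct (archimed (t - 5/2)) as [B1 B2].
  set (z := up (t - 5/2)) in *.
  rewrite INR_IZR_INZ in A1, A2.
  assert (C1 : (z - 1 < Z.of_nat i)%Z).
  { apply lt_IZR. rewrite minus_IZR. simpl. lra. }
  assert (C2 : (Z.of_nat i < z + 4)%Z).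
  { apply lt_IZR. rewrite plus_IZR. simpl. lra. }
  apply in_seq. lia.
Qed.

Lemma edist_fst u v : Rabs (fst u - fst v) <= edist u v.
Proof.
  unfold edist. rewrite <- sqrt_Rsqr_abs. apply sqrt_le_1_alt.
  unfold Rsqr. simpl. pose proof (Rle_0_sqr (snd u - snd v)). pose proof (Rle_0_sqr (fst u - fst v)). unfold Rsqr in *. lra.
Qed.
Lemma edist_snd u v : Rabs (snd u - snd v) <= edist u v.
Proof.
  unfold edist. rewrite <- sqrt_Rsqr_abs. apply sqrt_le_1_alt.
  unfold Rsqr. simpl. pose proof (Rle_0_sqr (snd u - snd v)). pose proof (Rle_0_sqr (fst u - fst v)). unfold Rsqr in *. lra.
Qed.

Definition box (a : R) (u : pt) : list squarelet :=
  list_prod (seq (Z.to_nat (up (fst u / sqrt a - 5/2))) 4)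
            (seq (Z.to_nat (up (snd u / sqrt a - 5/2))) 4).

Lemma bad_box a u k : 0 < a -> ~ r_ge (sqrt a) u k (sqrt (2 * a)) -> In k (box a u).
Proof.
  intros Ha Hn. unfold r_ge in Hn.
  apply not_all_ex_not in Hn. destruct Hn as [v Hv].
  apply Classical_Prop.imply_to_and in Hv. destruct Hv as [[Hx Hy] Hd].
  apply Rnot_le_lt in Hd.
  destruct k as [i j]. unfold box. apply in_prod.
  - eapply coord_bound; eauto. eapply Rle_lt_trans; [apply edist_fst|exact Hd].
  - eapply coord_bound; eauto. eapply Rle_lt_trans; [apply edist_snd|exact Hd].
Qed.

Lemma box_len a u : length (box a u) = 16%nat.
Proof. unfold box, squarelet. rewrite length_prod, !length_seq. reflexivity. Qed.

Theorem lemma6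
  (rmin : R) (n gamma s l : nat) (M : nat)
  (V : list pt) (D : list squarelet) (lam : list (pt * pt))
  (* parameters *)
  (Hrmin : 0 < rmin < 1)
  (Hn : (1 <= n)%nat)
  (Hs : gamma = (s * s)%nat)
  (Hgamma : (1 <= gamma)%nat)
  (Hgl : (gamma ^ (l + 1) <= n)%nat)
  (* integrality of a_l, a_{l+1}, n_l, n_{l+1} *)
  (Ha0 : is_nat (INR n / INR gamma ^ l))
  (Ha1 : is_nat (INR n / INR gamma ^ l / INR gamma))
  (Hn0 : is_nat (INR n / (2 ^ l * INR gamma ^ l)))
  (Hn1 : is_nat (INR n / (2 ^ l * INR gamma ^ l) / (2 * INR gamma)))
  (* M = K2 2^{-l} gamma, with K1 = 4(1+rmin)^2/(pi rmin^2), K2 = 1/(2 K1) *)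
  (HM : INR M = / (2 * (4 * (1 + rmin) ^ 2 / (PI * rmin ^ 2))) * / 2 ^ l * INR gamma)
  (HMeven : Nat.Even M)
  (HM100 : (100 <= M)%nat)
  (* the point set V *)
  (HVnd : NoDup V)
  (HVcard : INR (length V) = INR n / (2 ^ l * INR gamma ^ l))
  (HVbox : forall v, In v V ->
     0 <= fst v <= sqrt (INR n / INR gamma ^ l) /\
     0 <= snd v <= sqrt (INR n / INR gamma ^ l))
  (HVsep : forall u v, In u V -> In v V -> u <> v -> rmin <= edist u v)
  (* the set D of M dense squarelets *)
  (HDnd : NoDup D)
  (HDcard : length D = M)
  (HDidx : forall k, In k D -> (fst k < s)%nat /\ (snd k < s)%nat)
  (HDdense : forall k, In k D ->
     dense s (sqrt (INR n / INR gamma ^ l / INR gamma)) V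
           (INR n / (2 ^ l * INR gamma ^ l) / (2 * INR gamma)) k)
  (* the permutation traffic lambda *)
  (Hsrc : Permutation (map fst lam) V)
  (Hdst : Permutation (map snd lam) V) :
  let h := sqrt (INR n / INR gamma ^ l / INR gamma) in
  let nl1 := INR n / (2 ^ l * INR gamma ^ l) / (2 * INR gamma) in
  exists (Rp : pt * pt -> list squarelet) (C : nat) (cls : pt * pt -> squarelet -> nat),
    (forall p, In p lam ->
        NoDup (Rp p) /\ incl (Rp p) D /\ length (Rp p) = Nat.div M 2 /\
        (forall k, In k (Rp p) ->
           r_ge h (fst p) k (sqrt (2 * (INR n / INR gamma ^ l / INR gamma))) /\
           r_ge h (snd p) k (sqrt (2 * (INR n / INR gamma ^ l / INR gamma))))) /\
    INR C <= / (2 * (4 * (1 + rmin) ^ 2 / (PI * rmin ^ 2))) * / 2 ^ l * INR gamma ^ 2 /\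
    (forall p k, In p lam -> In k (Rp p) -> (cls p k < C)%nat) /\
    (* in each class every pair occurs at most once *)
    (forall p k k', In p lam -> In k (Rp p) -> In k' (Rp p) ->
        cls p k = cls p k' -> k = k') /\
    (* in each class every squarelet occurs in at most n_{l+1} incidences *)
    (forall (c : nat) (k : squarelet) (P : list (pt * pt)),
        NoDup P -> incl P lam ->
        (forall p, In p P -> In k (Rp p) /\ cls p k = c) ->
        INR (length P) <= nl1).
Proof.
  intros h nl1.
  set (a := INR n / INR gamma ^ l / INR gamma) in *.
  assert (Hg0 : 0 < INR gamma) by (apply lt_0_INR; lia).
  assert (Hn0' : 0 < INR n) by (apply lt_0_INR; lia).
  assert (Ha : 0 < a).
  { unfold a. unfold Rdiv. apply Rmult_lt_0_compat; [apply Rmult_lt_0_compat|].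
    - lra. - apply Rinv_0_lt_compat, pow_lt; lra. - apply Rinv_0_lt_compat; lra. }
  destruct Hn0 as [N0 HN0]. destruct Hn1 as [N1 HN1].
  rewrite HN0 in HN1. rewrite HN0 in HVcard.
  assert (HN01 : N0 = (N1 * (2 * gamma))%nat).
  { apply INR_eq. rewrite mult_INR, mult_INR, <- HN1. simpl. field. lra. }
  assert (Hlamnd : NoDup lam).
  { apply (NoDup_map_inv fst). eapply Permutation_NoDup; [apply Permutation_sym, Hsrc|exact HVnd]. }
  assert (Hlamlen : length lam = N0).
  { apply INR_eq. rewrite <- HVcard, <- (Permutation_length Hsrc), length_map. reflexivity. }
  destruct HMeven as [H0 HH0].
  set (H := Nat.div M 2).
  assert (HMH : M = (2 * H)%nat).
  { unfold H. rewrite HH0. rewrite Nat.mul_comm, Nat.div_mul; lia. }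
  set (c0 := sqrt (2 * a)).
  set (goodP := fun (p : pt * pt) k => r_ge h (fst p) k c0 /\ r_ge h (snd p) k c0).
  set (gb := fun p k => if excluded_middle_informative (goodP p k) then true else false).
  set (Rp := fun p => firstn H (filter (gb p) D)).
  set (cls := fun p k => (pos pair_dec p lam / N1 * H + pos sq_dec k (Rp p))%nat).
  assert (HRlen : forall p, length (Rp p) = H).
  { intro p. unfold Rp. rewrite length_firstn.
    assert (Hb : (length (filter (fun x => negb (gb p x)) D) <= 32)%nat).
    { replace 32%nat with (length (box a (fst p) ++ box a (snd p))).
      2:{ rewrite length_app, !box_len. reflexivity. }
      apply NoDup_incl_length. apply NoDup_filter; auto.
      intros k Hk. apply filter_In in Hk. destruct Hk as [_ Hk].
      unfold gb in Hk. destruct (excluded_middle_informative (goodP p k)) as [_|Hng]; [discriminate|].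
      unfold goodP in Hng. apply in_or_app.
      destruct (Classical_Prop.not_and_or _ _ Hng); [left|right]; apply bad_box; auto. }
    pose proof (filter_length (gb p) D). lia. }
  exists Rp, (gamma * M)%nat, cls.
  split; [|split; [|split; [|split]]].
  - intros p _. split; [|split; [|split]].
    + apply nodup_firstn, NoDup_filter; auto.
    + intros k Hk. apply in_firstn_in, filter_In in Hk. tauto.
    + apply HRlen.
    + intros k Hk. apply in_firstn_in, filter_In in Hk. destruct Hk as [_ Hk].
      unfold gb in Hk. destruct (excluded_middle_informative (goodP p k)) as [Hg|_]; [exact Hg|discriminate].
  - rewrite mult_INR, HM. right. ring.
  - intros p k Hp Hk. unfold cls.
    assert (HN1p : (0 < N1)%nat).
    { destruct N1; [|lia]. destruct lam; [contradiction|simpl in Hlamlen; lia]. }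
    pose proof (pos_lt pair_dec p lam Hp).
    pose proof (pos_lt sq_dec k (Rp p) Hk). rewrite HRlen in *.
    assert (Hb : (pos pair_dec p lam / N1 < 2 * gamma)%nat).
    { apply Nat.Div0.div_lt_upper_bound; lia. }
    nia.
  - intros p k k' Hp Hk Hk' E. unfold cls in E.
    apply (pos_inj sq_dec k k' (Rp p)); auto. lia.
  - intros c k P HPnd HPl HP.
    destruct P as [|p0 P0].
    { simpl. unfold nl1. rewrite HN0, HN1. apply pos_INR. }
    assert (HN1p : (0 < N1)%nat).
    { destruct N1; [|lia]. assert (In p0 lam) by (apply HPl; left; auto).
      destruct lam; [contradiction|simpl in Hlamlen; lia]. }
    assert (HH : (0 < H)%nat) by lia.
    set (P := p0 :: P0) in *.
    assert (Hblk : forall p, In p P -> (pos pair_dec p lam / N1 = c / H)%nat).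
    { intros p Hp. destruct (HP p Hp) as [Hk Hc]. unfold cls in Hc.
      pose proof (pos_lt sq_dec k (Rp p) Hk). rewrite HRlen in *.
      rewrite <- Hc. assert (Hnz : H <> 0%nat) by lia. rewrite (Nat.div_add_l _ _ _ Hnz). rewrite (Nat.div_small _ _ H1). lia. }
    set (b := (c / H)%nat) in *.
    assert (Hle : (length (map (fun p => pos pair_dec p lam) P) <= N1)%nat).
    { apply Nat.le_trans with (length (seq (b * N1) N1)); [|rewrite length_seq; lia]. apply NoDup_incl_length.
      - apply Injective_map_NoDup_in; auto.
        intros x y Hx Hy. apply pos_inj; apply HPl; auto.
      - intros i Hi. apply in_map_iff in Hi. destruct Hi as [p [<- Hp]].
        apply in_seq. pose proof (Hblk p Hp).
        pose proof (Nat.div_mod_eq (pos pair_dec p lam) N1).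
        pose proof (Nat.mod_upper_bound (pos pair_dec p lam) N1 ltac:(lia)).
        nia. }
    rewrite length_map in Hle. unfold nl1. rewrite HN0, HN1. apply le_INR. exact Hle.
Qed.
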